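(* Let $(V_1, V_2)$ be a BCL pair on $\mathcal{H}$ such that $[V_2^*, V_1]$ is normal. Then \[ \operatorname{ran}[V_2^*, V_1] = \operatorname{ran}[V_1^*, V_2] \subseteq E_1, \] and $[V_2^*, V_1]|_{E_1^\perp} = [V_1^*, V_2]|_{E_1^\perp} = 0$.
   Context: All Hilbert spaces are complex and separable. An isometric pair is a pair $(V_1,V_2)$ of commuting isometries. An isometry $V$ is a shift if $V^{*m}\to0$ strongly. A BCL pair is an isometric pair with $V_1V_2$ a shift. $[V_2^*,V_1] := V_2^*V_1 - V_1V_2^*$ and $[V_1^*,V_2] := V_1^*V_2 - V_2V_1^*$. $C(V_1,V_2) := I - V_1V_1^* - V_2V_2^* + V_1V_2V_1^*V_2^*$ and $E_1 := \ker(C(V_1,V_2)-I)$. *)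

(* Defs.v *)
From HB Require Import structures.
From mathcomp Require Import all_boot all_order all_algebra.
From mathcomp Require Import reals complex.
From mathcomp Require Import classical_sets.
Set Implicit Arguments. Unset Strict Implicit. Unset Printing Implicit Defensive.
Import Order.TTheory GRing.Theory Num.Theory.
Local Open Scope ring_scope.

(* Norms are expressed through their squares: ||x||^2 = <x,x>. *)
Record HilbertSpace (R : realType) := {
  hcar :> lmodType R[i];
  inner : hcar -> hcar -> R[i];
  inner_linear : forall (a : R[i]) (x y z : hcar),
      inner (a *: x + y) z = a * inner x z + inner y z;
  inner_conj : forall x y : hcar, inner y x = (inner x y)^*;
  inner_ge0 : forall x : hcar, 0 <= inner x x;
  inner_definite : forall x : hcar, inner x x = 0 -> x = 0;
  complete : forall u : nat -> hcar,
      (forall eps : R[i], 0 < eps -> exists N : nat, forall m n : nat,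
          (N <= m)%N -> (N <= n)%N -> `|inner (u m - u n) (u m - u n)| < eps) ->
      exists l : hcar, forall eps : R[i], 0 < eps -> exists N : nat,
          forall n : nat, (N <= n)%N -> `|inner (u n - l) (u n - l)| < eps;
  separable : exists d : nat -> hcar, forall (x : hcar) (eps : R[i]), 0 < eps ->
      exists n : nat, `|inner (x - d n) (x - d n)| < eps
}.

Section Ops.
Variables (R : realType) (H : HilbertSpace R).

Definition is_adjoint (T Ts : H -> H) :=
  forall x y : H, inner (T x) y = inner x (Ts y).

Definition bounded_linear (T : H -> H) :=
  (forall (a : R[i]) (x y : H), T (a *: x + y) = a *: T x + T y) /\
  exists M : R[i], 0 <= M /\ forall x : H, inner (T x) (T x) <= M * inner x x.

Definition isometry (V : H -> H) :=
  bounded_linear V /\ forall x : H, inner (V x) (V x) = inner x x.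

Definition isometric_pair (V1 V2 : H -> H) :=
  isometry V1 /\ isometry V2 /\ forall x : H, V1 (V2 x) = V2 (V1 x).

Definition is_shift (V : H -> H) :=
  isometry V /\ exists Vs : H -> H, is_adjoint V Vs /\
    forall x : H, forall eps : R[i], 0 < eps -> exists N : nat,
      forall m : nat, (N <= m)%N ->
        `|inner (iter m Vs x) (iter m Vs x)| < eps.

Definition BCL_pair (V1 V2 : H -> H) :=
  isometric_pair V1 V2 /\ is_shift (fun x => V1 (V2 x)).

Definition normal_op (T : H -> H) :=
  bounded_linear T /\ exists Ts : H -> H, is_adjoint T Ts /\
    forall x : H, T (Ts x) = Ts (T x).

Definition commutator (A B : H -> H) : H -> H := fun x => A (B x) - B (A x).

Definition defect (V1 V2 V1s V2s : H -> H) : H -> H :=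
  fun x => x - V1 (V1s x) - V2 (V2s x) + V1 (V2 (V1s (V2s x))).

Definition ran (T : H -> H) : set H := [set y | exists x, T x = y].
Definition ker (T : H -> H) : set H := [set x | T x = 0].
Definition orth (S : set H) : set H := [set y | forall x, S x -> inner x y = 0].

End Ops.

(* Main.v *)
Require Import Defs.
From HB Require Import structures.
From mathcomp Require Import all_boot all_order all_algebra.
From mathcomp Require Import reals complex.
From mathcomp Require Import classical_sets boolp ring lra zify.
Import Order.TTheory GRing.Theory Num.Theory.
Local Open Scope ring_scope.

Section Basics.
Context {R : realType} {H : HilbertSpace R}.
Implicit Types (x y z u v w : H) (a : R[i]) (T S V Vs : H -> H).

Lemma ReD (z w : R[i]) : complex.Re (z + w) = complex.Re z + complex.Re w.
Proof. by case: z; case: w. Qed.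
Lemma ReN (z : R[i]) : complex.Re (- z) = - complex.Re z.
Proof. by case: z. Qed.
Lemma ReJ (z : R[i]) : complex.Re (z^*) = complex.Re z.
Proof. by case: z. Qed.
Lemma ReMr (t : R) (z : R[i]) : complex.Re ((t%:C)%C * z) = t * complex.Re z.
Proof. case: z => a b /=. by rewrite mul0r subr0. Qed.
Lemma conjCr (t : R) : ((t%:C)%C : R[i])^* = (t%:C)%C.
Proof. by apply: conj_Creal; apply/complex_realP; exists t. Qed.

Lemma inner0l y : inner (0 : H) y = 0.
Proof.
have := inner_linear 1 (0 : H) 0 y. rewrite scaler0 addr0 mul1r => h.
by apply: (addrI (inner 0 y)); rewrite addr0 -h.
Qed.
Lemma innerDl x y z : inner (x + y) z = inner x z + inner y z.
Proof. by rewrite -[x]scale1r inner_linear mul1r scale1r. Qed.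
Lemma innerZl a x z : inner (a *: x) z = a * inner x z.
Proof. by rewrite -[a *: x]addr0 inner_linear inner0l addr0. Qed.
Lemma innerNl x z : inner (- x) z = - inner x z.
Proof. by rewrite -scaleN1r innerZl mulN1r. Qed.
Lemma innerBl x y z : inner (x - y) z = inner x z - inner y z.
Proof. by rewrite innerDl innerNl. Qed.
Lemma inner0r y : inner y (0 : H) = 0.
Proof. by rewrite inner_conj inner0l conjC0. Qed.
Lemma innerDr x y z : inner z (x + y) = inner z x + inner z y.
Proof. by rewrite !(inner_conj _ z) innerDl rmorphD. Qed.
Lemma innerZr a x z : inner z (a *: x) = a^* * inner z x.
Proof. by rewrite !(inner_conj _ z) innerZl rmorphM. Qed.
Lemma innerNr x z : inner z (- x) = - inner z x.
Proof. by rewrite !(inner_conj _ z) innerNl rmorphN. Qed.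
Lemma innerBr x y z : inner z (x - y) = inner z x - inner z y.
Proof. by rewrite innerDr innerNr. Qed.

Lemma inner_ext u v : (forall z, inner z u = inner z v) -> u = v.
Proof.
move=> h; apply/eqP; rewrite -subr_eq0; apply/eqP; apply: inner_definite.
by rewrite innerBr h subrr.
Qed.

Definition nrm x : R := complex.Re (inner x x).
Lemma nrmE x : inner x x = ((nrm x)%:C)%C.
Proof. by rewrite /nrm RRe_real // ger0_real // inner_ge0. Qed.
Lemma nrm_ge0 x : 0 <= nrm x.
Proof. by rewrite -lecR -nrmE inner_ge0. Qed.
Lemma nrm_eq0 x : nrm x = 0 -> x = 0.
Proof. by move=> h; apply: inner_definite; rewrite nrmE h. Qed.
Lemma nrmD x y : nrm (x + y) = nrm x + nrm y + 2 * complex.Re (inner x y).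
Proof.
rewrite /nrm innerDl !innerDr !ReD [inner y x]inner_conj ReJ; lra.
Qed.
Lemma nrmN x : nrm (- x) = nrm x.
Proof. by rewrite /nrm innerNl innerNr opprK. Qed.
Lemma nrmB x y : nrm (x - y) = nrm x + nrm y - 2 * complex.Re (inner x y).
Proof. by rewrite nrmD nrmN innerNr ReN; lra. Qed.
Lemma nrmZr (t : R) x : nrm ((t%:C)%C *: x) = t ^+ 2 * nrm x.
Proof. by rewrite /nrm innerZl innerZr conjCr mulrA -rmorphM ReMr expr2. Qed.

Definition linop (T : H -> H) := forall a x y, T (a *: x + y) = a *: T x + T y.

Lemma lin0 T : linop T -> T 0 = 0.
Proof.
move=> hT; have := hT 1 0 0; rewrite scaler0 addr0 scale1r => h.
by apply: (addrI (T 0)); rewrite addr0 -h.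
Qed.
Lemma linD T : linop T -> forall x y, T (x + y) = T x + T y.
Proof. by move=> hT x y; have := hT 1 x y; rewrite !scale1r. Qed.
Lemma linZ T : linop T -> forall a x, T (a *: x) = a *: T x.
Proof. by move=> hT a x; rewrite -[a *: x]addr0 hT lin0 // addr0. Qed.
Lemma linN T : linop T -> forall x, T (- x) = - T x.
Proof. by move=> hT x; rewrite -scaleN1r linZ // scaleN1r. Qed.
Lemma linB T : linop T -> forall x y, T (x - y) = T x - T y.
Proof. by move=> hT x y; rewrite linD // linN. Qed.

Arguments lin0 {T}. Arguments linD {T}. Arguments linZ {T}. Arguments linN {T}. Arguments linB {T}.

Lemma adj_rev T S : is_adjoint T S -> forall x y, inner (S x) y = inner x (T y).
Proof. by move=> h x y; rewrite inner_conj -h -inner_conj. Qed.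

Lemma adj_lin T S : is_adjoint T S -> linop S.
Proof.
move=> h a x y; apply: inner_ext => z.
by rewrite -h innerDr innerZr !h -innerZr -innerDr.
Qed.

Lemma ReiM (z : R[i]) : complex.Re ('i%C * z) = - complex.Im z.
Proof. by case: z => a b /=; rewrite mul0r mul1r sub0r. Qed.

Lemma complex_eqRI (z w : R[i]) : complex.Re z = complex.Re w ->
  complex.Im z = complex.Im w -> z = w.
Proof. by case: z; case: w => /= a b c d -> ->. Qed.

Lemma isom_inner V : Defs.isometry V -> forall x y, inner (V x) (V y) = inner x y.
Proof.
move=> [[hl _] hn] x y.
have hN : forall u, nrm (V u) = nrm u by move=> u; rewrite /nrm hn.
have hR : forall u w, complex.Re (inner (V u) (V w)) = complex.Re (inner u w).
  move=> u w; have := hN (u + w); rewrite (linD hl) !nrmD !hN.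
  move=> h; lra.
apply: complex_eqRI; first exact: hR.
have := hR ('i%C *: x) y; rewrite (linZ hl) !innerZl !ReiM => h; lra.
Qed.

Lemma isomK V Vs : Defs.isometry V -> is_adjoint V Vs -> forall x, Vs (V x) = x.
Proof.
move=> hV ha x; apply: inner_ext => z.
by rewrite -ha isom_inner.
Qed.

Lemma adj0 T S : is_adjoint T S -> S 0 = 0.
Proof. by move=> h; apply: inner_ext => z; rewrite -h !inner0r. Qed.

Lemma normC_inner v : `|inner v v| = ((nrm v)%:C)%C.
Proof. by rewrite ger0_norm ?inner_ge0 // nrmE. Qed.

Lemma ltC_Re (e : R[i]) (r : R) : 0 < e -> (((r%:C)%C < e) = (r < complex.Re e)).
Proof. by case: e => a b; rewrite !ltcE /= => /andP [/eqP <- _]; rewrite eqxx. Qed.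

Definition dl (n : nat) : R := (n.+1%:R)^-1.
Lemma dl_ge0 n : 0 <= dl n.
Proof. by rewrite /dl invr_ge0 ler0n. Qed.

Lemma archi_delta (e : R) : 0 < e -> exists N : nat, forall n, (N <= n)%N -> dl n < e.
Proof. rewrite /dl.
move=> he; exists (Num.Def.archi_bound e^-1) => n hn.
have hi : 0 < e^-1 by rewrite invr_gt0.
have h1 := archi_boundP (ltW hi).
have h2 : (Num.Def.archi_bound e^-1)%:R <= n.+1%:R :> R by rewrite ler_nat; lia.
have hn0 : 0 < n.+1%:R :> R by rewrite ltr0n.
rewrite -[_^-1]mul1r ltr_pdivrMr //.
have : e * e^-1 = 1 by rewrite mulfV // gt_eqF.
nra.
Qed.


Arguments adj_rev {T S}. Arguments adj_lin {T S}. Arguments adj0 {T S}.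
Arguments isom_inner {V}. Arguments isomK {V Vs}.

Arguments archi_delta {e}.

Lemma para x y : nrm (x - y) + nrm (x + y) = 2 * nrm x + 2 * nrm y.
Proof. rewrite nrmB nrmD; lra. Qed.

Lemma nrmB_le x y : nrm (x - y) <= 2 * nrm x + 2 * nrm y.
Proof. have := para x y; have := nrm_ge0 (x + y); lra. Qed.

Lemma nrm_twice x : nrm (x + x) = 4 * nrm x.
Proof. rewrite nrmD /nrm; lra. Qed.

Lemma ran_sub T S (M : R) : 0 < M -> is_adjoint T S ->
  (forall x, T (S x) = S (T x)) -> (forall x, nrm (T x) <= M * nrm x) ->
  forall y, exists z, S z = T y.
Proof.
move=> hM hadj hcom hbd y.
have hadj' := adj_rev hadj.
have linS := adj_lin hadj.
have linT := adj_lin (hadj' : is_adjoint S T).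
have nST : forall x, nrm (S x) = nrm (T x).
  move=> x; rewrite /nrm hadj' hcom -hadj (inner_conj (T x)) ReJ //.
pose f x := nrm (y - S x).
pose E := [set r : R | exists x, r = f x]%classic.
have hlb : forall r, E r -> 0 <= r by move=> r [x ->]; exact: nrm_ge0.
have hinf : has_inf E.
  split; first by exists (f 0), 0.
  by exists 0 => r /hlb.
pose d := inf E.
have hd : forall x, d <= f x.
  move=> x; apply: ge_inf; first by exists 0 => r /hlb.
  by exists x.
have hex : forall n : nat, exists x, f x < d + dl n.
  move=> n; have hp : 0 < (n.+1%:R)^-1 :> R by rewrite invr_gt0 ltr0n.
  have [r [x ->] hr] := inf_adherent hp hinf.
  by exists x.
have [xs hxs] := choice hex.
have hC : forall n m, nrm (T (xs n) - T (xs m)) <= 2 * dl n + 2 * dl m.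
  move=> n m.
  rewrite -(linB linT) -nST (linB linS).
  pose c : R[i] := ((2^-1 : R)%:C)%C.
  pose mid := c *: (xs n + xs m).
  have hc : c + c = 1.
    rewrite /c -rmorphD /=.
    have -> : (2^-1 + 2^-1 : R) = 1 by field.
    by [].
  have hSS : S mid + S mid = S (xs n) + S (xs m).
    by rewrite -(linD linS) /mid -scalerDl hc scale1r (linD linS).
  have hmid : y - S mid + (y - S mid) = (y - S (xs n)) + (y - S (xs m)).
    by rewrite addrACA -opprD hSS opprD addrACA.
  have := para (y - S (xs n)) (y - S (xs m)).
  rewrite -hmid nrm_twice.
  have -> : y - S (xs n) - (y - S (xs m)) = - (S (xs n) - S (xs m)).
    by rewrite opprB opprB addrC addrA subrK.
  rewrite nrmN.
  have h1 := hxs n; have h2 := hxs m; have h3 := hd mid.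
  rewrite /f in h1 h2 h3.
  move=> h; lra.
have hsm : forall n, nrm (T (y - S (xs n))) <= M * dl n.
  move=> n; set r := y - S (xs n); set q := T r.
  pose t : R := M^-1.
  have hMt : M * t = 1 by rewrite /t mulfV // gt_eqF.
  have := hd (xs n + ((t%:C)%C *: q)).
  rewrite /f (linD linS) (linZ linS).
  have -> : y - (S (xs n) + (t%:C)%C *: S q) = r - (t%:C)%C *: S q by rewrite opprD addrA.
  rewrite nrmB nrmZr innerZr conjCr ReMr.
  have -> : inner r (S q) = inner q q by rewrite -hadj.
  change (complex.Re (inner q q)) with (nrm q).
  move=> h1.
  have h2 := hxs n; rewrite /f -/r in h2.
  have h3 : t ^+ 2 * nrm (S q) <= t * nrm q.
    rewrite nST; apply: (le_trans (y := t ^+ 2 * (M * nrm q))).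
      by rewrite ler_wpM2l ?sqr_ge0 ?hbd.
    by rewrite expr2 -mulrA (mulrA t M) (mulrC t M) hMt mul1r.
  have h4 : t * nrm q <= dl n by lra.
  have -> : nrm q = M * (t * nrm q) by rewrite mulrA hMt mul1r.
  by rewrite ler_wpM2l // ltW.
have [z hz] : exists l : H, forall eps : R[i], 0 < eps -> exists N : nat,
    forall n : nat, (N <= n)%N -> `|inner (T (xs n) - l) (T (xs n) - l)| < eps.
  apply: (@complete R H (fun n => T (xs n))) => eps heps.
  have he : 0 < complex.Re eps by rewrite -ltC_Re.
  have he4 : 0 < complex.Re eps / 4 by rewrite divr_gt0.
  have [N hN] := archi_delta he4.
  exists N => m n hm hn; rewrite normC_inner ltC_Re //.
  have := hC m n; have := hN m hm; have := hN n hn; lra.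
exists z.
have key : forall n, nrm (S z - T y) <= 2 * (M * nrm (T (xs n) - z)) + 2 * (M * dl n).
  move=> n.
  have -> : S z - T y = S (z - T (xs n)) - T (y - S (xs n)).
    by rewrite (linB linS) (linB linT) -hcom opprB addrA subrK.
  apply: (le_trans (nrmB_le _ _)).
  have h1 : nrm (S (z - T (xs n))) <= M * nrm (T (xs n) - z).
    by rewrite nST (linB linT) -nrmN opprB -(linB linT) hbd.
  have h2 := hsm n.
  lra.
have hp0 : ~ (0 < nrm (S z - T y)).
  move=> hp; set p := nrm (S z - T y) in hp key.
  pose e := p / (4 * M).
  have he : 0 < e by rewrite divr_gt0 // mulr_gt0.
  have hMe : M * e = p / 4 by rewrite /e; field; rewrite gt_eqF.
  have heC : 0 < (e%:C)%C :> R[i] by rewrite ltcR.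
  have [N1 hN1] := hz _ heC.
  have [N2 hN2] := archi_delta he.
  have := key (maxn N1 N2).
  have := hN1 (maxn N1 N2) (leq_maxl _ _); rewrite normC_inner ltcR => h1.
  have h2 := hN2 (maxn N1 N2) (leq_maxr _ _).
  have h3 : M * nrm (T (xs (maxn N1 N2)) - z) < M * e by rewrite ltr_pM2l.
  have h4 : M * dl (maxn N1 N2) < M * e by rewrite ltr_pM2l.
  lra.
apply/eqP; rewrite -subr_eq0; apply/eqP; apply: nrm_eq0.
by apply/eqP; rewrite eq_le nrm_ge0 andbT leNgt; apply/negP.
Qed.

Lemma nrm_normal T S : is_adjoint T S -> (forall x, T (S x) = S (T x)) ->
  forall x, nrm (S x) = nrm (T x).
Proof.
move=> hadj hcom x.
by rewrite /nrm (adj_rev hadj) hcom -hadj (inner_conj (T x)) ReJ.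
Qed.

End Basics.

Arguments lin0 {R H T}. Arguments linD {R H T}. Arguments linZ {R H T}.
Arguments linN {R H T}. Arguments linB {R H T}.
Arguments adj_rev {R H T S}. Arguments adj_lin {R H T S}. Arguments adj0 {R H T S}.
Arguments isom_inner {R H V}. Arguments isomK {R H V Vs}.
Arguments ran_sub {R H T S M}. Arguments nrm_normal {R H T S}.

Local Open Scope classical_set_scope.

Theorem lemma4p2 (R : realType) (H : HilbertSpace R) (V1 V2 V1s V2s : H -> H) :
  BCL_pair V1 V2 ->
  is_adjoint V1 V1s -> is_adjoint V2 V2s ->
  normal_op (commutator V2s V1) ->
  let E1 := ker (fun x => defect V1 V2 V1s V2s x - x) in
  ran (commutator V2s V1) = ran (commutator V1s V2) /\
  ran (commutator V1s V2) `<=` E1 /\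
  (forall x : H, orth E1 x -> commutator V2s V1 x = 0) /\
  (forall x : H, orth E1 x -> commutator V1s V2 x = 0).
Proof.
move=> [[hV1 [hV2 hcomm]] _] ha1 ha2 [[_ [M [hM0 hMb]]] [Ts [hTs hTcomm]]] E1.
have linV1 : linop V1 := hV1.1.1.
have linV2 : linop V2 := hV2.1.1.
have V1K := isomK hV1 ha1.
have V2K := isomK hV2 ha2.
set A := commutator V2s V1 in hMb hTs hTcomm *.
set B := commutator V1s V2.
have adjAB : is_adjoint A B.
  move=> u y; rewrite /A /B /commutator innerBl innerBr.
  by rewrite ha1 !(adj_rev ha2) ha1.
have adjBA : is_adjoint B A := adj_rev adjAB.
have hTsB : forall y, Ts y = B y.
  by move=> y; apply: inner_ext => z; rewrite -hTs adjAB.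
have hAB : forall x, A (B x) = B (A x).
  by move=> x; rewrite -(hTsB x) -(hTsB (A x)); exact: hTcomm.
have hBA : forall x, B (A x) = A (B x) by move=> x; rewrite hAB.
have hMr : M = ((complex.Re M)%:C)%C by rewrite RRe_real // ger0_real.
have hM' : 0 <= complex.Re M by rewrite -lecR -hMr.
have bdA : forall x, nrm (A x) <= (complex.Re M + 1) * nrm x.
  move=> x; have := hMb x; rewrite !nrmE hMr -rmorphM lecR => h.
  have := nrm_ge0 x; nra.
have bdB : forall x, nrm (B x) <= (complex.Re M + 1) * nrm x.
  by move=> x; rewrite (nrm_normal adjAB hAB).
have hMp : 0 < complex.Re M + 1 by lra.
have AV2 : forall x, A (V2 x) = 0.
  by move=> x; rewrite /A /commutator hcomm !V2K subrr.
have BV1 : forall x, B (V1 x) = 0.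
  by move=> x; rewrite /B /commutator -hcomm !V1K subrr.
have B0 : B 0 = 0 := adj0 adjAB.
have A0 : A 0 = 0 := adj0 adjBA.
have kerAB : forall u, A u = 0 -> B u = 0.
  move=> u hu; apply: inner_definite.
  by rewrite (adj_rev adjAB) hAB hu B0 inner0r.
have kerBA : forall u, B u = 0 -> A u = 0.
  move=> u hu; apply: inner_definite.
  by rewrite adjAB hBA hu A0 inner0r.
have AV1 : forall x, A (V1 x) = 0 by move=> x; apply: kerBA.
have BV2 : forall x, B (V2 x) = 0 by move=> x; apply: kerAB.
have V1sB : forall y, V1s (B y) = 0.
  move=> y; apply: inner_ext => z.
  by rewrite -ha1 -adjAB AV1 inner0l inner0r.
have V2sB : forall y, V2s (B y) = 0.
  move=> y; apply: inner_ext => z.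
  by rewrite -ha2 -adjAB AV2 inner0l inner0r.
have V1s0 : V1s 0 = 0 := adj0 ha1.
have inE1 : forall w, V1s w = 0 -> V2s w = 0 -> E1 w.
  move=> w h1 h2; rewrite /E1 /ker /defect /=.
  by rewrite h2 h1 V1s0 !(lin0 linV2) !(lin0 linV1) !subr0 addr0 subrr.
have ranBE : ran B `<=` E1.
  by move=> w [x <-]; apply: inE1.
split.
  apply/seteqP; split => w [x <-].
    have [z hz] := ran_sub hMp adjAB hAB bdA x.
    by exists z.
  have [z hz] := ran_sub hMp adjBA hBA bdB x.
  by exists z.
split; first exact: ranBE.
split.
  move=> x hx; apply: inner_definite.
  rewrite adjAB inner_conj.
  have -> : inner (B (A x)) x = 0 by apply: hx; apply: ranBE; exists (A x).
  by rewrite conjC0.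
move=> x hx; apply: inner_definite.
rewrite (adj_rev adjAB) inner_conj hAB.
have -> : inner (B (A x)) x = 0.
  by apply: hx; apply: ranBE; exists (A x).
by rewrite conjC0.
Qed.
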